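(* In the setting described in the context, let $(S^k,M^k)_{k}$ be solutions of the finite-volume scheme as provided by the existence result (satisfying $0\le S^k_K\le1$, $0\le M^k_K<1$ and the estimate $\|Z(M^k)\|_{0,1,\mathcal{M}}+\Delta tC_1\|F(M^k)\|_{1,2,\mathcal{M}}^2\le\|Z(M^{k-1})\|_{0,1,\mathcal{M}}+\Delta tC_2$ with $C_1,C_2>0$ independent of $\Delta x,\Delta t$). For $\phi\in C_0^\infty(\Omega_T)$ set $\phi^k_K=\frac{1}{\mathrm{m}(K)}\int_K\phi(x,t_k)dx$. Then for any $\phi\in C_0^\infty(\Omega_T)$ there exist constants $C_3,C_4>0$, only depending on the data and the mesh, such that $$\sum_{k=1}^{N_T}\sum_{K\in\mathcal{T}}\mathrm{m}(K)(M^k_K-M^{k-1}_K)\phi^k_K\le C_3\|\nabla\phi\|_{L^\infty(\Omega_T)},\qquad \sum_{k=1}^{N_T}\sum_{K\in\mathcal{T}}\mathrm{m}(K)(S^k_K-S^{k-1}_K)\phi^k_K\le C_4\|\nabla\phi\|_{L^\infty(\Omega_T)}.$$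
   Context: Setting: $\Omega\subset\mathbb{R}^2$ bounded polygonal, $\Omega_T=\Omega\times(0,T)$, $\mathcal{D}$ an admissible discretization with $\mathrm{d}(x_K,\sigma)\ge\xi\mathrm{d}_\sigma$, $S^0,M^0\in L^2(\Omega)$ with $0\le S^0\le1$, $0\le M^0<1$, $0<M^D<1$ constant, $d_1,d_2>0$, $\kappa_1,\kappa_2,\kappa_3\ge0$, $\kappa_4>0$, $a\ge1$, $b\ge0$. $f(M)=M^b/(1-M)^a$, $F(M)=\int_0^Mf(s)ds$ on $[0,1)$; $g(S,M)=-\kappa_1\frac{SM}{\kappa_4+S}$, $h(S,M)=\kappa_3\frac{SM}{\kappa_4+S}-\kappa_2M$; $Z(M)=\int_{M^D}^MF(s)ds-F(M^D)(M-M^D)$. Admissible mesh (Eymard–Gallouët–Herbin): open polygonal control volumes $\mathcal{T}$ partitioning $\Omega$, edges $\mathcal{E}=\mathcal{E}_{\rm int}\cup\mathcal{E}_{\rm ext}$, points $x_K$ with $\overline{x_Kx_L}$ orthogonal to each interior edge $\sigma=K|L$; $\mathcal{E}_K$ edges of $K$. $\mathrm{d}_\sigma=\mathrm{d}(x_K,x_L)$ for $\sigma=K|L$, $\mathrm{d}(x_K,\sigma)$ for boundary edges; $\tau_\sigma=\mathrm{m}(\sigma)/\mathrm{d}_\sigma$; $\Delta t=T/N_T$, $t_k=k\Delta t$. Discrete notation: $v_{K,\sigma}=v_L$ if $\sigma=K|L$, $v_\sigma$ for boundary edges; $\mathrm{D}_{K,\sigma}v=v_{K,\sigma}-v_K$,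 $\mathrm{D}_\sigma v=|\mathrm{D}_{K,\sigma}v|$; $\|v\|_{0,p,\mathcal{M}}=(\sum_K\mathrm{m}(K)|v_K|^p)^{1/p}$, $|v|_{1,2,\mathcal{M}}^2=\sum_{\sigma}\tau_\sigma(\mathrm{D}_\sigma v)^2$, $\|v\|^2_{1,2,\mathcal{M}}=\|v\|^2_{0,2,\mathcal{M}}+|v|^2_{1,2,\mathcal{M}}$; $\Phi(M^k)$ has boundary entries $\Phi(M^D)$. Scheme: $S^0_K,M^0_K$ cell averages; $S^k_\sigma=1$, $M^k_\sigma=M^D$ on boundary edges; $\frac{\mathrm{m}(K)}{\Delta t}(S^k_K-S^{k-1}_K)-d_1\sum_{\sigma\in\mathcal{E}_K}\tau_\sigma\mathrm{D}_{K,\sigma}S^k=\mathrm{m}(K)g(S^k_K,M^k_K)$, $\frac{\mathrm{m}(K)}{\Delta t}(M^k_K-M^{k-1}_K)-d_2\sum_{\sigma\in\mathcal{E}_K}\tau_\sigma\mathrm{D}_{K,\sigma}F(M^k)=\mathrm{m}(K)h(S^k_K,M^k_K)$. *)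

(* Defs.v *)
From HB Require Import structures.
From mathcomp Require Import all_boot all_order all_algebra.
From mathcomp Require Import all_classical all_reals all_analysis.
Import Order.TTheory GRing.Theory Num.Theory numFieldNormedType.Exports.

Set Implicit Arguments.
Unset Strict Implicit.
Unset Printing Implicit Defensive.

Local Open Scope classical_set_scope.
Local Open Scope ring_scope.

Definition pt (R : realType) := (R * R)%type.

Definition leb2 (R : realType) :=
  ((@lebesgue_measure R) \x (@lebesgue_measure R))%E.

Definition area (R : realType) (A : set (pt R)) : R := fine (@leb2 R A).

Definition edist (R : realType) (p q : pt R) : R :=
  Num.sqrt ((p.1 - q.1) ^+ 2 + (p.2 - q.2) ^+ 2).

Definition segment (R : realType) (a b : pt R) : set (pt R) :=
  [set x | exists t : R, 0 <= t <= 1 /\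
      x = (a.1 + t * (b.1 - a.1), a.2 + t * (b.2 - a.2))].

Definition dist_to (R : realType) (x : pt R) (A : set (pt R)) : R :=
  inf [set edist x y | y in A].

(* topological boundary of an open set *)
Definition bdry (R : realType) (A : set (pt R)) : set (pt R) :=
  closure A `\` A.

(* open bounded convex polygon: bounded nonempty finite intersection of
   open half-planes {x | h.1.1 x.1 + h.1.2 x.2 < h.2} *)
Definition open_convex_polygon (R : realType) (K : set (pt R)) : Prop :=
  K !=set0 /\ bounded_set K /\
  exists s : seq ((R * R) * R),
    K = [set x | all (fun h => h.1.1 * x.1 + h.1.2 * x.2 < h.2) s].

Definition polygonal_domain (R : realType) (Omega : set (pt R)) : Prop :=
  open Omega /\ bounded_set Omega /\ Omega !=set0 /\
  exists s : seq (pt R * pt R),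
    bdry Omega = \bigcup_(p in [set` s]) segment p.1 p.2.

(* A contains no non-degenerate segment (its 1-dim measure is 0) *)
Definition no_segment_in (R : realType) (A : set (pt R)) : Prop :=
  ~ exists a b : pt R, a <> b /\ segment a b `<=` A.

Record mesh (R : realType) := Mesh {
  cell : finType;
  edge : finType;
  ctrl : cell -> set (pt R);
  ea : edge -> pt R;               (* sigma = segment [ea, eb]         *)
  eb : edge -> pt R;
  edges_of : cell -> {set edge};
  center : cell -> pt R
}.

Section MeshDefs.
Variables (R : realType) (D : mesh R).

Definition eseg (s : edge D) : set (pt R) := segment (ea s) (eb s).
Definition elen (s : edge D) : R := edist (ea s) (eb s).
Definition carea (K : cell D) : R := area (ctrl K).

Definition neighb (K : cell D) (s : edge D) : option (cell D) :=
  [pick L | (L != K) && (s \in edges_of L)].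

Definition own (s : edge D) : option (cell D) :=
  [pick K | s \in edges_of K].

Definition is_interior (s : edge D) : Prop :=
  exists K L : cell D, K != L /\ s \in edges_of K /\ s \in edges_of L.

Definition dsig (s : edge D) : R :=
  match own s with
  | Some K => match neighb K s with
              | Some L => edist (center K) (center L)
              | None => dist_to (center K) (eseg s)
              end
  | None => 0
  end.

Definition tau (s : edge D) : R := elen s / dsig s.

Definition nval (v : cell D -> R) (vb : R) (K : cell D) (s : edge D) : R :=
  match neighb K s with Some L => v L | None => vb end.

Definition DK (v : cell D -> R) (vb : R) (K : cell D) (s : edge D) : R :=
  nval v vb K s - v K.

(* D_sigma v = |D_{K,sigma} v| (independent of the side K) *)
Definition Dsig (v : cell D -> R) (vb : R) (s : edge D) : R :=
  match own s with Some K => `|DK v vb K s| | None => 0 end.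

Definition norm01 (v : cell D -> R) : R := \sum_(K : cell D) carea K * `|v K|.
Definition norm02sq (v : cell D -> R) : R := \sum_(K : cell D) carea K * v K ^+ 2.
Definition semi12sq (v : cell D -> R) (vb : R) : R :=
  \sum_(s : edge D) tau s * Dsig v vb s ^+ 2.
Definition norm12sq (v : cell D -> R) (vb : R) : R := norm02sq v + semi12sq v vb.

Definition cavg (g : pt R -> R) (K : cell D) : R :=
  Rintegral (@leb2 R) (ctrl K) g / carea K.

End MeshDefs.

(* Admissible mesh of Omega (Eymard-Gallouet-Herbin) with the regularity
   d(x_K,sigma) >= xi d_sigma. *)
Definition admissible (R : realType) (Omega : set (pt R)) (D : mesh R) (xi : R)
  : Prop :=
  polygonal_domain Omega /\
  (forall K : cell D, open_convex_polygon (ctrl K) /\ ctrl K `<=` Omega) /\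
  (forall K L : cell D, K != L -> ctrl K `&` ctrl L = set0) /\
  closure Omega = \bigcup_(K in [set: cell D]) closure (ctrl K) /\
  (forall s : edge D, ea s <> eb s) /\
  (forall s : edge D, exists K, s \in edges_of K) /\
  (forall (s : edge D) (K L L' : cell D), K != L -> K != L' -> L != L' ->
     ~ [/\ s \in edges_of K, s \in edges_of L & s \in edges_of L']) /\
  (forall K : cell D,
     bdry (ctrl K) = \bigcup_(s in [set s | s \in edges_of K]) eseg s) /\
  (forall (K : cell D) (s : edge D), s \in edges_of K ->
     (forall L, L != K -> s \notin edges_of L) -> eseg s `<=` bdry Omega) /\
  (forall (K L : cell D), K != L ->
     (exists s, s \in edges_of K /\ s \in edges_of L /\
                closure (ctrl K) `&` closure (ctrl L) = eseg s)
     \/ no_segment_in (closure (ctrl K) `&` closure (ctrl L))) /\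
  (forall K : cell D, closure (ctrl K) (center K)) /\
  (forall (K L : cell D) (s : edge D), K != L -> s \in edges_of K ->
     s \in edges_of L ->
     center K <> center L /\
     ((center L).1 - (center K).1) * ((eb s).1 - (ea s).1) +
     ((center L).2 - (center K).2) * ((eb s).2 - (ea s).2) = 0) /\
  (forall s : edge D, 0 < dsig s) /\
  0 < xi /\
  (forall (K : cell D) (s : edge D), s \in edges_of K ->
     xi * dsig s <= dist_to (center K) (eseg s)).

Definition fM (R : realType) (a b : R) (M : R) : R := M `^ b / (1 - M) `^ a.

Definition FM (R : realType) (a b : R) (M : R) : R :=
  Rintegral (@lebesgue_measure R) `[0, M] (fM a b).

Definition oint (R : realType) (u v : R) (g : R -> R) : R :=
  if u <= v then Rintegral (@lebesgue_measure R) `[u, v] g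
  else - Rintegral (@lebesgue_measure R) `[v, u] g.

Definition ZM (R : realType) (a b MD : R) (M : R) : R :=
  oint MD M (FM a b) - FM a b MD * (M - MD).

Definition gSM (R : realType) (k1 k4 : R) (S M : R) : R := - k1 * (S * M / (k4 + S)).
Definition hSM (R : realType) (k2 k3 k4 : R) (S M : R) : R :=
  k3 * (S * M / (k4 + S)) - k2 * M.

Definition scheme_solution (R : realType) (D : mesh R) (T : R) (NT : nat)
  (S0 M0 : pt R -> R) (MD d1 d2 k1 k2 k3 k4 a b : R)
  (S M : nat -> cell D -> R) : Prop :=
  let dt := T / NT%:R in
  [/\ forall K, S 0%N K = cavg S0 K,
      forall K, M 0%N K = cavg M0 K,
      forall k K, (1 <= k <= NT)%N ->
        carea K / dt * (S k K - S k.-1 K)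
        - d1 * \sum_(s in edges_of K) tau s * DK (S k) 1 K s
        = carea K * gSM k1 k4 (S k K) (M k K)
    & forall k K, (1 <= k <= NT)%N ->
        carea K / dt * (M k K - M k.-1 K)
        - d2 * \sum_(s in edges_of K) tau s *
                 DK (fun L => FM a b (M k L)) (FM a b MD) K s
        = carea K * hSM k2 k3 k4 (S k K) (M k K)].

(* space-time points ((x1,x2),t) *)
Definition spt (R : realType) := (pt R * R)%type.

Fixpoint iterD (R : realType) (vs : seq (spt R)) (phi : spt R -> R) : spt R -> R :=
  match vs with
  | [::] => phi
  | v :: vs' => 'D_v (iterD vs' phi)
  end.

(* C^infty: all iterated directional derivatives exist and are continuous *)
Definition smooth (R : realType) (phi : spt R -> R) : Prop :=
  forall vs : seq (spt R),
    continuous (iterD vs phi) /\ forall x v, derivable (iterD vs phi) x v.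

Definition OmegaT (R : realType) (Omega : set (pt R)) (T : R) : set (spt R) :=
  [set p | Omega p.1 /\ 0 < p.2 < T].

Definition test_fun (R : realType) (Omega : set (pt R)) (T : R) (phi : spt R -> R)
  : Prop :=
  smooth phi /\
  exists C : set (spt R), compact C /\ C `<=` OmegaT Omega T /\
                          forall p, ~ C p -> phi p = 0.

Definition gradx_norm (R : realType) (phi : spt R -> R) (p : spt R) : R :=
  Num.sqrt ('D_(((1 : R), (0 : R)), (0 : R)) phi p ^+ 2
          + 'D_(((0 : R), (1 : R)), (0 : R)) phi p ^+ 2).

Definition grad_Linf (R : realType) (Omega : set (pt R)) (T : R) (phi : spt R -> R)
  : R := sup [set gradx_norm phi p | p in OmegaT Omega T].

Definition phik (R : realType) (D : mesh R) (T : R) (NT : nat)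
  (phi : spt R -> R) (k : nat) (K : cell D) : R :=
  cavg (fun x => phi (x, k%:R * (T / NT%:R))) K.

(* Main.v *)
Require Import Defs.
From HB Require Import structures.
From mathcomp Require Import all_boot all_order all_algebra.
From mathcomp Require Import all_classical all_reals all_analysis.
Import Order.TTheory GRing.Theory Num.Theory numFieldNormedType.Exports.
Local Open Scope classical_set_scope.
Local Open Scope ring_scope.
From mathcomp Require Import lra ring.

Lemma halfplane_meas (R : realType) (a1 a2 c : R) :
  measurable [set x : (R * R)%type | a1 * x.1 + a2 * x.2 < c].
Proof.
have mf : measurable_fun setT (fun x : (R * R)%type => a1 * x.1 + a2 * x.2).
  apply: measurable_realfun.measurable_funD; apply: measurable_realfun.measurable_funM => //.
have := mf measurableT `]-oo, c[%classic (measurable_itv _).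
rewrite setTI; congr measurable; apply/seteqP; split => x /=; rewrite in_itv /=; by [].
Qed.

Lemma poly_meas (R : realType) (K : set (pt R)) : open_convex_polygon K ->
  measurable (K : set (R * R)%type).
Proof.
move=> [_ [_ [s ->]]]; elim: s => [|h s IH].
  have -> : [set x : pt R | all (fun h => h.1.1 * x.1 + h.1.2 * x.2 < h.2) [::]] = setT by apply/seteqP; split.
  exact: measurableT.
have -> : [set x : pt R | all (fun h => h.1.1 * x.1 + h.1.2 * x.2 < h.2) (h :: s)]
   = [set x : (R*R)%type | h.1.1 * x.1 + h.1.2 * x.2 < h.2] `&` [set x : pt R | all (fun h => h.1.1 * x.1 + h.1.2 * x.2 < h.2) s].
  by apply/seteqP; split => x /= /andP.
by apply: measurableI => //; exact: halfplane_meas.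
Qed.

Lemma ge0_le_int_nm d (T : measurableType d) (R : realType)
  (mu : {measure set T -> \bar R}) (D : set T) (f1 f2 : T -> \bar R) :
  (forall x, D x -> (0 <= f1 x)%E) -> (forall x, D x -> (f1 x <= f2 x)%E) ->
  (\int[mu]_(x in D) f1 x <= \int[mu]_(x in D) f2 x)%E.
Proof.
move=> f10 f12.
have f20 : forall x, D x -> (0 <= f2 x)%E by move=> x Dx; exact: le_trans (f10 x Dx) (f12 x Dx).
rewrite !ge0_integralE //; apply: ereal_sup_le => _ [h hle <-]; exists h => //= x.
exact: le_trans (hle x) (lee_restrict f12 x).
Qed.

Lemma int_bound (R : realType) (K : set (pt R)) (g : pt R -> R) (c : R) :
  measurable (K : set (R * R)%type) -> (forall x, `|g x| <= c) ->
  area K != 0 -> `|Rintegral (@leb2 R) K g| <= c * area K.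
Proof.
move=> mK gc aK.
have c0 : 0 <= c by apply: le_trans (gc 0) ; exact: normr_ge0.
have mfin : @leb2 R K = (area K)%:E.
  rewrite /area; move: aK; rewrite /area.
  have : (0 <= @leb2 R K)%E by exact: measure_ge0.
  by case: (@leb2 R K) => [r| |] //= _; rewrite eqxx.
have Hp : (0 <= \int[@leb2 R]_(x in K) (funepos (EFin \o g) x))%E.
  by apply: integral_ge0 => x _; exact: funepos_ge0.
have Hn : (0 <= \int[@leb2 R]_(x in K) (funeneg (EFin \o g) x))%E.
  by apply: integral_ge0 => x _; exact: funeneg_ge0.
have Hp2 : (\int[@leb2 R]_(x in K) (funepos (EFin \o g) x) <= (c * area K)%:E)%E.
  rewrite EFinM -mfin -integral_cst //; apply: ge0_le_int_nm => x _; first exact: funepos_ge0.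
  rewrite funeposE /= -EFin_max lee_fin ge_max c0 andbT.
  exact: le_trans (ler_norm _) (gc x).
have Hn2 : (\int[@leb2 R]_(x in K) (funeneg (EFin \o g) x) <= (c * area K)%:E)%E.
  rewrite EFinM -mfin -integral_cst //; apply: ge0_le_int_nm => x _; first exact: funeneg_ge0.
  rewrite funenegE /= -EFin_max lee_fin ge_max c0 andbT.
  by apply: le_trans (gc x); rewrite -normrN; exact: ler_norm.
rewrite /Rintegral integralE.
move: Hp Hn Hp2 Hn2.
case: (\int[@leb2 R]_(x in K) (funepos (EFin \o g) x))%E => [p| |] //;
case: (\int[@leb2 R]_(x in K) (funeneg (EFin \o g) x))%E => [n| |] //.
rewrite !lee_fin /= => p0 n0 pc nc.
rewrite ler_norml; apply/andP; split; lra.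
Qed.

Section An.
Variable R : realType.
Let e1 : spt R := (((1:R),(0:R)),(0:R)).

Lemma Dzero (phi : spt R -> R) (C : set (spt R)) v p :
  compact C -> (forall p, ~ C p -> phi p = 0) -> ~ C p -> 'D_v phi p = 0.
Proof.
move=> cC phi0 Cp.
have oC : open (~` C).
  by apply: closed_openC; apply: compact_closed => //; exact: norm_hausdorff.
rewrite (@near_eq_derive _ _ _ phi (cst 0)) ?derive_cst //.
near=> q; apply: phi0; near: q; exact: oC.
Unshelve. all: by end_near. Qed.

Lemma Dbound (phi : spt R -> R) (C : set (spt R)) v :
  smooth phi -> compact C -> (forall p, ~ C p -> phi p = 0) ->
  exists B, 0 <= B /\ forall p, `|'D_v phi p| <= B.
Proof.
move=> sm cC phi0.
have ct : continuous ('D_v phi) := (sm [:: v]).1.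
have : compact ('D_v phi @` C) by apply: continuous_compact => //; exact: continuous_subspaceT.
move/compact_bounded => [B [Breal HB]].
exists (`|B| + 1); split; first by rewrite addr_ge0 // normr_ge0.
move=> p; have [Cp|nCp] := pselect (C p).
  have : `|B| + 1 > B by apply: (le_lt_trans (ler_norm B)); lra.
  by move/HB => /(_ ('D_v phi p)); apply; exists p.
by rewrite (@Dzero phi C v p cC phi0 nCp) normr0 addr_ge0 // normr_ge0.
Qed.

Lemma sqrt_le_abs (a b : R) : Num.sqrt (a ^+ 2 + b ^+ 2) <= `|a| + `|b|.
Proof.
rewrite -(ger0_norm (addr_ge0 (normr_ge0 a) (normr_ge0 b))) -sqrtr_sqr ler_sqrt ?sqr_ge0 //.
rewrite sqrrD !real_normK ?num_real // -addrA lerD2l lerDr.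
by rewrite mulrn_wge0 // mulr_ge0 // normr_ge0.
Qed.

Lemma abs_le_sqrt (a b : R) : `|a| <= Num.sqrt (a ^+ 2 + b ^+ 2).
Proof. by rewrite -sqrtr_sqr ler_sqrt ?addr_ge0 ?sqr_ge0 // lerDl sqr_ge0. Qed.

Lemma grad_props (Omega : set (pt R)) T phi : test_fun Omega T phi ->
  0 <= grad_Linf Omega T phi /\ forall p, `|derive phi p e1| <= grad_Linf Omega T phi.
Proof.
move=> [sm [C [cC [COm phi0]]]].
have [B1 [B10 HB1]] := @Dbound phi C (((1:R),(0:R)),(0:R)) sm cC phi0.
have [B2 [B20 HB2]] := @Dbound phi C (((0:R),(1:R)),(0:R)) sm cC phi0.
set E := [set gradx_norm phi p | p in OmegaT Omega T].
have ubE : ubound E (B1 + B2).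
  move=> _ [p _ <-]; rewrite /gradx_norm; apply: le_trans (sqrt_le_abs _ _) _.
  exact: lerD.
have G0 : 0 <= sup E.
  have [[e Ee]|E0] := pselect (E !=set0); last first.
    have -> : E = set0 by apply/seteqP; split => x // Ex; apply: E0; exists x.
    by rewrite sup0.
  have hs : has_sup E by split; [exists e | exists (B1 + B2)].
  case: Ee (Ee) => p _ <- Ee; apply: le_trans (sup_upper_bound hs Ee).
  exact: sqrtr_ge0.
split => // p.
have [Cp|nCp] := pselect (C p); last by rewrite (@Dzero phi C _ p cC phi0 nCp) normr0.
have Ep : E (gradx_norm phi p) by exists p => //; exact: COm.
have hs : has_sup E by split; [exists (gradx_norm phi p) | exists (B1 + B2)].
apply: le_trans (sup_upper_bound hs Ep); exact: abs_le_sqrt.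
Qed.

Lemma g_derive (phi : spt R -> R) (p : spt R) (s : R) :
  smooth phi ->
  is_derive s 1 (fun s : R => phi (p + s *: e1)) (derive phi (p + s *: e1) e1).
Proof.
move=> sm.
have key : (fun h : R => h^-1 *: (((fun s : R => phi (p + s *: e1)) \o shift s) (h *: 1)
              - phi (p + s *: e1)))
         = (fun h : R => h^-1 *: ((phi \o shift (p + s *: e1)) (h *: e1) - phi (p + s *: e1))).
  apply: funext => h /=; congr (_ *: (phi _ - _)).
  rewrite [h *: 1]mulr1 scalerDl; rewrite addrC -addrA; congr (_ + _); exact: addrC.
split.
  rewrite /derivable key; exact: ((sm [::]).2 (p + s *: e1) e1).
by rewrite /derive key.
Qed.

Lemma phi_bound (Omega : set (pt R)) (rho : R) :
  (forall y, Omega y -> `|y| <= rho) -> 0 <= rho ->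
  forall T phi, test_fun Omega T phi ->
  forall p, `|phi p| <= (2 * rho + 1) * grad_Linf Omega T phi.
Proof.
move=> Hrho rho0 T phi tf p.
have [G0 HG] := @grad_props Omega T phi tf.
case: tf => sm [C [cC [COm phi0]]].
have [Cp|nCp] := pselect (C p); last by rewrite phi0 // normr0 mulr_ge0 //; lra.
have [Op _] := COm p Cp.
have p11 : `|p.1.1| <= rho.
  apply: le_trans (Hrho _ Op); rewrite [X in _ <= X]prod_normE; by rewrite le_max lexx.
set L := rho + 1 - p.1.1.
have L0 : 0 < L by move: p11; rewrite ler_norml /L => /andP[]; lra.
have LL : L <= 2 * rho + 1 by move: p11; rewrite ler_norml /L => /andP[]; lra.
have gd := fun s => @g_derive phi p s sm.
have gc : {within `[0, L], continuous (fun s : R => phi (p + s *: e1))}.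
  by apply: derivable_within_continuous => s _; exact: (gd s).(ex_derive).
have [c _ Hc] := MVT L0 (fun s _ => gd s) gc.
move: Hc; rewrite scale0r addr0 subr0.
have -> : phi (p + L *: e1) = 0.
  apply: phi0 => /COm [/Hrho] /=; rewrite prod_normE /= => Hn _.
  move: Hn; rewrite ge_max => /andP[+ _].
  rewrite -[L%:A]/(L * 1) mulr1 /L; have -> : p.1.1 + (rho + 1 - p.1.1) = rho + 1 by rewrite addrC subrK.
  rewrite ger0_norm; lra.
rewrite sub0r => /(congr1 (fun x => `|x|)); rewrite normrN => ->.
rewrite normrM (ger0_norm (ltW L0)) mulrC.
apply: ler_pM; [exact: ltW L0 | exact: normr_ge0 | exact: LL | exact: HG].
Qed.
End An.

Lemma cavg_bound (R : realType) (D : mesh R) (K : cell D) (g : pt R -> R) (c : R) :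
  open_convex_polygon (ctrl K) -> (forall x, `|g x| <= c) -> `|cavg g K| <= c.
Proof.
move=> oK gc.
have c0 : 0 <= c by apply: le_trans (gc 0) ; exact: normr_ge0.
rewrite /cavg; have [a0|a0] := eqVneq (carea K) 0.
  by rewrite a0 invr0 mulr0 normr0.
have apos : 0 < carea K.
  rewrite lt_def a0 /=; apply: fine_ge0; exact: measure_ge0.
rewrite normrM normfV (gtr0_norm apos) ler_pdivrMr //.
apply: int_bound => //. exact: poly_meas.
Qed.

Lemma carea_ge0 (R : realType) (D : mesh R) (K : cell D) : 0 <= carea K.
Proof. apply: fine_ge0; exact: measure_ge0. Qed.

Lemma neighb_eq (R : realType) (D : mesh R) (K K' : cell D) s :
  (forall L L', K != L -> K != L' -> L != L' ->
     ~ [/\ s \in edges_of K, s \in edges_of L & s \in edges_of L']) ->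
  K' != K -> s \in edges_of K -> s \in edges_of K' -> neighb K s = Some K'.
Proof.
move=> H nK sK sK'; rewrite /neighb; case: pickP => [L /andP[LK sL]|none].
  case: (eqVneq L K') => [->//|LK']; exfalso; apply: (H L K').
  - by rewrite eq_sym.
  - by rewrite eq_sym.
  - exact: LK'.
  - by split.
by have := none K'; rewrite nK sK'.
Qed.

Lemma DK_Dsig (R : realType) (Omega : set (pt R)) (D : mesh R) xi
  (v : cell D -> R) vb K s :
  admissible Omega D xi -> s \in edges_of K -> `|DK v vb K s| = Dsig v vb s.
Proof.
case=> [_ [_ [_ [_ [_ [_ [H3 _]]]]]]] sK.
rewrite /Dsig /own; case: pickP => [K' sK'|none]; last by have := none K; rewrite sK.
case: (eqVneq K' K) => [->//|nK].
rewrite /DK /nval (@neighb_eq _ _ K K' s (H3 s K) nK sK sK').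
rewrite (@neighb_eq _ _ K' K s (H3 s K') _ sK' sK); last by rewrite eq_sym.
by rewrite distrC.
Qed.

Lemma tau_ge0 (R : realType) (Omega : set (pt R)) (D : mesh R) xi (s : edge D) :
  admissible Omega D xi -> 0 <= tau s.
Proof.
case=> [_ [_ [_ [_ [_ [_ [_ [_ [_ [_ [_ [_ [Hd _]]]]]]]]]]]]].
rewrite /tau divr_ge0 //; last exact: ltW.
exact: sqrtr_ge0.
Qed.

Lemma tele (R : realType) (z N : nat -> R) (c1 c2 : R) (n : nat) :
  0 < c1 -> 0 <= z n ->
  (forall k, (1 <= k <= n)%N -> z k + c1 * N k <= z k.-1 + c2) ->
  c1 * \sum_(1 <= k < n.+1) N k <= z 0%N + n%:R * c2.
Proof.
move=> c10 zn0 H.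
suff Hm : forall m, (m <= n)%N -> c1 * \sum_(1 <= k < m.+1) N k + z m <= z 0%N + m%:R * c2.
  by have := Hm n (leqnn n); lra.
elim => [_|m IH mn].
  by rewrite big_geq // mulr0 add0r mul0r addr0.
rewrite big_nat_recr //= mulrDr.
have := H m.+1; rewrite mn /= => /(_ isT) Hk.
have := IH (ltnW mn); rewrite -natr1 mulrDl mul1r; lra.
Qed.

Lemma q_bound (R : realType) (S M k4 : R) : 0 < k4 -> 0 <= S <= 1 -> 0 <= M < 1 ->
  `|S * M / (k4 + S)| <= 1.
Proof.
move=> k40 /andP[S0 S1] /andP[M0 M1].
have kS : 0 < k4 + S by lra.
rewrite ger0_norm; last by rewrite divr_ge0 ?mulr_ge0 //; lra.
rewrite ler_pdivrMr // mul1r; apply: le_trans (_ : S <= _); last lra.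
by rewrite ler_piMr //; lra.
Qed.

Lemma h_bound (R : realType) (S M k2 k3 k4 : R) : 0 < k4 -> 0 <= k2 -> 0 <= k3 ->
  0 <= S <= 1 -> 0 <= M < 1 -> `|hSM k2 k3 k4 S M| <= k3 + k2.
Proof.
move=> k40 k20 k30 HS HM; rewrite /hSM.
apply: le_trans (ler_normB _ _) _; rewrite (normrM k3) (normrM k2) (ger0_norm k30) (ger0_norm k20).
apply: lerD; first by rewrite ler_piMr //; exact: q_bound.
rewrite ler_piMr //; case/andP: HM => M0 M1; rewrite ger0_norm //; lra.
Qed.

Lemma g_bound (R : realType) (S M k1 k4 : R) : 0 < k4 -> 0 <= k1 ->
  0 <= S <= 1 -> 0 <= M < 1 -> `|gSM k1 k4 S M| <= k1.
Proof.
move=> k40 k10 HS HM; rewrite /gSM (normrM (- k1)) normrN (ger0_norm k10).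
by rewrite ler_piMr //; exact: q_bound.
Qed.

Lemma sum_sub_le (R : realType) (I : finType) (A : {set I}) (F : I -> R) :
  (forall i, 0 <= F i) -> \sum_(i in A) F i <= \sum_i F i.
Proof.
move=> F0; rewrite big_mkcond /=; apply: ler_sum => i _.
by case: ifP => // _; exact: F0.
Qed.

Lemma abs_le_1sq (R : realType) (x : R) : `|x| <= 1 + x ^+ 2.
Proof.
have [x1|x1] := lerP `|x| 1.
  by apply: le_trans x1 _; rewrite lerDl sqr_ge0.
apply: le_trans (_ : x ^+ 2 <= _); last by rewrite lerDr.
rewrite -real_normK ?num_real // expr2 ler_peMr //; exact: ltW.
Qed.

Theorem lemma5p2 (R : realType) (Omega : set (pt R)) (D : mesh R) (xi T : R)
  (S0 M0 : pt R -> R) (MD d1 d2 k1 k2 k3 k4 a b C1 C2 : R) :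
  admissible Omega D xi ->
  0 < T ->
  (* initial data in L^2(Omega), 0 <= S^0 <= 1, 0 <= M^0 < 1 *)
  measurable_fun Omega S0 -> measurable_fun Omega M0 ->
  (@leb2 R).-integrable Omega (fun x => (S0 x ^+ 2)%:E) ->
  (@leb2 R).-integrable Omega (fun x => (M0 x ^+ 2)%:E) ->
  {ae @leb2 R, forall x, Omega x -> 0 <= S0 x <= 1} ->
  {ae @leb2 R, forall x, Omega x -> 0 <= M0 x < 1} ->
  0 < MD < 1 -> 0 < d1 -> 0 < d2 ->
  0 <= k1 -> 0 <= k2 -> 0 <= k3 -> 0 < k4 -> 1 <= a -> 0 <= b ->
  0 < C1 -> 0 < C2 ->
  exists C3 C4 : R, 0 < C3 /\ 0 < C4 /\
  forall (NT : nat) (S M : nat -> cell D -> R),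
    (0 < NT)%N ->
    @scheme_solution R D T NT S0 M0 MD d1 d2 k1 k2 k3 k4 a b S M ->
    (forall k K, (1 <= k <= NT)%N -> 0 <= S k K <= 1 /\ 0 <= M k K < 1) ->
    (forall k, (1 <= k <= NT)%N ->
       norm01 (fun K => ZM a b MD (M k K))
       + T / NT%:R * C1 * norm12sq (fun K => FM a b (M k K)) (FM a b MD)
       <= norm01 (fun K => ZM a b MD (M k.-1 K)) + T / NT%:R * C2) ->
    forall phi : spt R -> R, test_fun Omega T phi ->
      \sum_(1 <= k < NT.+1) \sum_(K : cell D)
          carea K * (M k K - M k.-1 K) * @phik R D T NT phi k K
        <= C3 * grad_Linf Omega T phi /\
      \sum_(1 <= k < NT.+1) \sum_(K : cell D)
          carea K * (S k K - S k.-1 K) * @phik R D T NT phi k K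
        <= C4 * grad_Linf Omega T phi.
Proof.
move=> adm T0 _ _ _ _ _ _ _ d10 d20 k10 k20 k30 k40 _ _ C10 C20.
have adm0 := adm.
case: adm0 => [[_ [bO _]] [Hc _]].
case: bO => B [_ HB].
set rho := `|B| + 1.
have rho0 : 0 <= rho by rewrite addr_ge0 // normr_ge0.
have Hrho : forall y, Omega y -> `|y| <= rho.
  move=> y Oy; apply: (HB rho) => //; rewrite /rho.
  by apply: le_lt_trans (ler_norm B) _; lra.
set P := 2 * rho + 1.
have P0 : 0 < P by rewrite /P; lra.
set Nc : R := #|{: cell D}|%:R.
set Tau := \sum_(s : edge D) tau s.
set TauE := \sum_(K : cell D) \sum_(s in edges_of K) tau s.
set Ar := \sum_(K : cell D) carea K.
pose z0 := @norm01 R D (fun K : cell D => ZM a b MD (cavg M0 K)).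
have Nc0 : 0 <= Nc by exact: ler0n.
have Tau0 : 0 <= Tau by apply: sumr_ge0 => s _; exact: tau_ge0 adm.
have TauE0 : 0 <= TauE.
  by apply: sumr_ge0 => K _; apply: sumr_ge0 => s _; exact: tau_ge0 adm.
have Ar0 : 0 <= Ar by apply: sumr_ge0 => K _; exact: carea_ge0.
have z00 : 0 <= z0.
  by apply: sumr_ge0 => K _; apply: mulr_ge0; [exact: carea_ge0 | exact: normr_ge0].
set AM := P * (d2 * Nc * (T * Tau + (z0 + T * C2) / C1) + T * (k3 + k2) * Ar).
set AS := P * (T * (d1 * TauE + k1 * Ar)).
have TC2 : 0 <= T * C2 by rewrite mulr_ge0 //; lra.
have AM0 : 0 <= AM.
  rewrite /AM mulr_ge0 ?addr_ge0 ?mulr_ge0 ?divr_ge0 ?invr_ge0 ?addr_ge0 ?mulr_ge0 ?invr_ge0 //; lra.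
have AS0 : 0 <= AS.
  rewrite /AS mulr_ge0 ?addr_ge0 ?mulr_ge0 ?divr_ge0 ?invr_ge0 ?addr_ge0 ?mulr_ge0 ?invr_ge0 //; lra.
apply: (ex_intro _ (AM + 1)); apply: (ex_intro _ (AS + 1)); split; [lra | split; [lra | ]].
move=> NT S M NT0 [HS0 HM0 HS HM] bnds energy phi tf.
have [G0 _] := @grad_props R Omega T phi tf.
set G := grad_Linf Omega T phi.
have Hphik : forall (k : nat) (K : cell D), `|phik T NT phi k K| <= P * G.
  move=> k K; rewrite /phik; apply: cavg_bound; first exact: (Hc K).1.
  move=> x; exact: (@phi_bound R Omega rho Hrho rho0 T phi tf).
set dt := T / NT%:R.
have NTr : 0 < NT%:R :> R by rewrite ltr0n.
have dt0 : 0 < dt by rewrite divr_gt0.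
have NTdt : NT%:R * dt = T by rewrite /dt mulrC divfK // gt_eqF.


pose Nk (k : nat) := norm12sq (fun K : cell D => FM a b (M k K)) (FM a b MD).
have semi_le : forall k, (1 <= k <= NT)%N -> forall K : cell D,
   `|\sum_(s in edges_of K) tau s * DK (fun L => FM a b (M k L)) (FM a b MD) K s| <= Tau + Nk k.
  move=> k hk K.
  apply: le_trans (ler_norm_sum _ _ _) _.
  apply: le_trans (_ : \sum_(s in edges_of K) tau s * (1 + Dsig (fun L => FM a b (M k L)) (FM a b MD) s ^+ 2) <= _).
    apply: ler_sum => s sK; rewrite normrM (ger0_norm (@tau_ge0 R Omega D xi s adm)).
    apply: ler_wpM2l; first exact: (@tau_ge0 R Omega D xi s adm).
    rewrite -(@DK_Dsig R Omega D xi _ _ K s adm sK) real_normK ?num_real //; exact: abs_le_1sq.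
  apply: le_trans; first (apply: sum_sub_le => s;
    by rewrite mulr_ge0 ?addr_ge0 ?sqr_ge0 //; exact: (@tau_ge0 R Omega D xi s adm)).
  under eq_bigr do rewrite mulrDr mulr1.
  rewrite big_split /= lerD2l /Nk /norm12sq lerDr.
  by apply: sumr_ge0 => K' _; rewrite mulr_ge0 ?sqr_ge0 // carea_ge0.
have keyM : forall k, (1 <= k <= NT)%N ->
  \sum_(K : cell D) carea K * (M k K - M k.-1 K) * phik T NT phi k K
   <= P * G * (dt * ((d2 * Nc * Tau + (k3 + k2) * Ar) + d2 * Nc * Nk k)).
  move=> k hk.
  apply: le_trans (_ : \sum_(K : cell D) P * G * (dt * (d2 * (Tau + Nk k) + (k3 + k2) * carea K)) <= _).
    apply: ler_sum => K _.
    have eqK : carea K * (M k K - M k.-1 K) = dt * (d2 * (\sum_(s in edges_of K) tau s * DK (fun L => FM a b (M k L)) (FM a b MD) K s) + carea K * hSM k2 k3 k4 (S k K) (M k K)).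
      rewrite -(HM k K hk) [d2 * _ + _]addrC subrK mulrCA mulrA divfK //; exact: lt0r_neq0.
    rewrite eqK.
    have [hS hM] := bnds k K hk.
    have hw : `|d2 * (\sum_(s in edges_of K) tau s * DK (fun L => FM a b (M k L)) (FM a b MD) K s) + carea K * hSM k2 k3 k4 (S k K) (M k K)| <= d2 * (Tau + Nk k) + (k3 + k2) * carea K.
      apply: le_trans (ler_normD _ _) _; rewrite !normrM (ger0_norm (ltW d20)) (ger0_norm (@carea_ge0 R D K)).
      apply: lerD; first by apply: ler_wpM2l; [exact: ltW d20 | exact: semi_le].
      rewrite mulrC; apply: ler_wpM2r; [exact: (@carea_ge0 R D K) | exact: h_bound].
    apply: le_trans (ler_norm _) _.
    rewrite normrM (normrM dt) (gtr0_norm dt0) [P * G * _]mulrC.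
    apply: ler_pM; [by rewrite mulr_ge0 // ltW | exact: normr_ge0 | apply: ler_wpM2l; [exact: ltW dt0 | exact: hw] | exact: Hphik].
  rewrite -mulr_sumr; apply: ler_wpM2l; first by rewrite mulr_ge0 // ltW.
  rewrite -mulr_sumr; apply: ler_wpM2l; first exact: ltW dt0.
  rewrite big_split /= sumr_const -mulr_sumr.
  rewrite -mulr_natr (_ : #|xpredT|%:R = Nc) // -/Ar.
  lra.
have keyS : forall k, (1 <= k <= NT)%N ->
  \sum_(K : cell D) carea K * (S k K - S k.-1 K) * phik T NT phi k K
   <= P * G * (dt * (d1 * TauE + k1 * Ar)).
  move=> k hk.
  apply: le_trans (_ : \sum_(K : cell D) P * G * (dt * (d1 * \sum_(s in edges_of K) tau s + k1 * carea K)) <= _).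
    apply: ler_sum => K _.
    have eqK : carea K * (S k K - S k.-1 K) = dt * (d1 * (\sum_(s in edges_of K) tau s * DK (S k) 1 K s) + carea K * gSM k1 k4 (S k K) (M k K)).
      rewrite -(HS k K hk) [d1 * _ + _]addrC subrK mulrCA mulrA divfK //; exact: lt0r_neq0.
    rewrite eqK.
    have [hS hM] := bnds k K hk.
    have hw : `|d1 * (\sum_(s in edges_of K) tau s * DK (S k) 1 K s) + carea K * gSM k1 k4 (S k K) (M k K)| <= d1 * \sum_(s in edges_of K) tau s + k1 * carea K.
      apply: le_trans (ler_normD _ _) _; rewrite (normrM d1) (normrM (carea K)) (ger0_norm (ltW d10)) (@ger0_norm _ (carea K)); last exact: carea_ge0.
      apply: lerD.
        apply: ler_wpM2l; first exact: ltW d10.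
        apply: le_trans (ler_norm_sum _ _ _) _; apply: ler_sum => s sK.
        rewrite normrM (ger0_norm (@tau_ge0 R Omega D xi s adm)) -[X in _ <= X]mulr1.
        apply: ler_wpM2l; first exact: (@tau_ge0 R Omega D xi s adm).
        rewrite /DK /nval; case: (neighb K s) => [L|].
          have [hSL _] := bnds k L hk; move: hS hSL => /andP[? ?] /andP[? ?].
          rewrite ler_norml; apply/andP; split; lra.
        move: hS => /andP[? ?]; rewrite ler_norml; apply/andP; split; lra.
      rewrite mulrC; apply: ler_wpM2r; [exact: (@carea_ge0 R D K) | ]. exact: g_bound.
    apply: le_trans (ler_norm _) _.
    rewrite normrM (normrM dt) (gtr0_norm dt0) [P * G * _]mulrC.
    apply: ler_pM; [by rewrite mulr_ge0 // ltW | exact: normr_ge0 | apply: ler_wpM2l; [exact: ltW dt0 | exact: hw] | exact: Hphik].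
  rewrite -mulr_sumr; apply: ler_wpM2l; first by rewrite mulr_ge0 // ltW.
  rewrite -mulr_sumr; apply: ler_wpM2l; first exact: ltW dt0.
  by rewrite big_split /= -!mulr_sumr.
have PG0 : 0 <= P * G by rewrite mulr_ge0 // ltW.
split.
  apply: le_trans; first (apply: ler_sum_nat => i hi; exact: keyM).
  rewrite -mulr_sumr -mulr_sumr big_split /= sumr_const_nat subn1 /= -mulr_sumr -mulr_natr.
  set sN := \sum_(1 <= i < NT.+1) Nk i.
  have tl := @tele R (fun k => @norm01 R D (fun K => ZM a b MD (M k K))) Nk (dt * C1) (dt * C2) NT (mulr_gt0 dt0 C10).
  have z0e : @norm01 R D (fun K => ZM a b MD (M 0%N K)) = z0.
    by rewrite /z0; congr norm01; apply: funext => K; rewrite HM0.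
  move: tl; rewrite /= z0e -/sN.
  have zn : 0 <= @norm01 R D (fun K => ZM a b MD (M NT K)).
    by apply: sumr_ge0 => K _; apply: mulr_ge0; [exact: carea_ge0 | exact: normr_ge0].
  move=> /(_ zn energy).
  rewrite mulrA NTdt => tl.
  set Q := (z0 + T * C2) / C1.
  have sQ : dt * sN <= Q by rewrite /Q ler_pdivlMr //; lra.
  set X := d2 * Nc * Tau + (k3 + k2) * Ar.
  have -> : dt * (X * NT%:R + d2 * Nc * sN) = T * X + d2 * Nc * (dt * sN) by rewrite -NTdt; lra.
  apply: le_trans (_ : P * G * (T * X + d2 * Nc * Q) <= _).
    apply: ler_wpM2l => //; rewrite lerD2l; apply: ler_wpM2l => //; rewrite mulr_ge0 //; lra.
  have -> : P * G * (T * X + d2 * Nc * Q) = AM * G by rewrite /AM /X /Q; lra.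
  by rewrite mulrDl mul1r lerDl.
apply: le_trans; first (apply: ler_sum_nat => i hi; exact: keyS).
rewrite sumr_const_nat subn1 /= -mulr_natr.
have -> : P * G * (dt * (d1 * TauE + k1 * Ar)) * NT%:R = AS * G by rewrite /AS -NTdt; lra.
by rewrite mulrDl mul1r lerDl.
Qed.
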